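(* Let $X$ be a Banach space over $\mathbb R$ and let $\sum_n x_n$ be a series in $X$ which is not unconditionally convergent. Let $\mathcal I$ be an ideal on $\mathbb N$ with the Baire property. Then the set $$B(\mathcal I):=\left\{t \in \{-1,1\}^{\mathbb N} \colon \sum_n t(n)x_n \text{ is } \mathcal I\text{-convergent}\right\}$$ is meager in $\{-1,1\}^{\mathbb N}$ (with the product topology).
   Context: $\mathbb N=\{1,2,\dots\}$. An ideal on $\mathbb N$ is a family $\mathcal I\subset\mathcal P(\mathbb N)$ closed under finite unions and subsets, with $\mathbb N\notin\mathcal I$ and containing all finite subsets of $\mathbb N$. Identifying subsets of $\mathbb N$ with their characteristic functions, $\mathcal I$ is regarded as a subset of the Cantor space $\{0,1\}^{\mathbb N}$ (product topology), and ''$\mathcal I$ has the Baire property'' refers to this subset. A sequence $(y_n)$ in a normed space is $\mathcal I$-convergent to $y$ if $\{n:\|y_n-y\|>\varepsilon\}\in\mathcal I$ for every $\varepsilon>0$; a series is $\mathcal I$-convergent if its sequence of partial sums is $\mathcal I$-convergent to some element. A series $\sum_n x_n$ is unconditionally convergent if $\sum_n x_{p(n)}$ converges for every permutation $p$ of $\mathbb N$. *)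

(* Defs.v *)
From HB Require Import structures.
From mathcomp Require Import all_boot all_order all_algebra.
From mathcomp Require Import all_classical all_reals.
From mathcomp Require Import topology normedtype sequences cantor.
Set Implicit Arguments. Unset Strict Implicit. Unset Printing Implicit Defensive.
Import Order.TTheory GRing.Theory Num.Theory.
Import numFieldNormedType.Exports.
Local Open Scope classical_set_scope.
Local Open Scope ring_scope.

(* Convention: the paper's N = {1,2,...} is represented by Rocq's nat via the
   shift k <-> k+1.  Index n : nat stands for the paper's index n+1. *)

Definition nowhere_dense {T : topologicalType} (A : set T) : Prop :=
  interior (closure A) = set0.

Definition meager {T : topologicalType} (A : set T) : Prop :=
  exists F : (set T)^nat, (forall n, nowhere_dense (F n)) /\ A `<=` \bigcup_n F n.

Definition baire_property {T : topologicalType} (A : set T) : Prop :=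
  exists U : set T, open U /\ meager ((A `\` U) `|` (U `\` A)).

Definition is_ideal (I : set (set nat)) : Prop :=
  [/\ forall A B, I A -> I B -> I (A `|` B),
      forall A B, B `<=` A -> I A -> I B,
      ~ I setT &
      forall A, finite_set A -> I A].

Definition ideal_in_cantor (I : set (set nat)) : set cantor_space :=
  [set f | I [set n | f n]].

Definition I_cvg_to {R : realType} {X : normedModType R}
    (I : set (set nat)) (y : nat -> X) (l : X) : Prop :=
  forall eps : R, 0 < eps -> I [set n | eps < `|y n - l|].

(* A series sum_n x_n is I-convergent: its sequence of partial sums
   (s_1, s_2, ...) -- i.e. at index n the sum of the first n+1 terms -- is
   I-convergent to some element. *)
Definition I_cvg_series {R : realType} {X : normedModType R}
    (I : set (set nat)) (x : nat -> X) : Prop :=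
  exists l : X, I_cvg_to I (fun n => series x n.+1) l.

Definition uncond_cvg {R : realType} {X : normedModType R} (x : nat -> X) : Prop :=
  forall p : nat -> nat, bijective p -> cvg (series (x \o p) @ \oo).

(* {-1,1}^N is represented by the Cantor space bool^N via true |-> 1, false |-> -1
   (a homeomorphism). *)
Definition sgn_of {R : realType} (b : bool) : R := if b then 1 else -1.

Definition B_set {R : realType} {X : normedModType R}
    (I : set (set nat)) (x : nat -> X) : set cantor_space :=
  [set t | I_cvg_series I (fun n => sgn_of (R:=R) (t n) *: x n)].

(* Main.v *)
Require Import Defs.
From HB Require Import structures.
From mathcomp Require Import all_boot all_order all_algebra.
From mathcomp Require Import all_classical all_reals.
From mathcomp Require Import topology normedtype sequences cantor.
Import numFieldNormedType.Exports.
Local Open Scope classical_set_scope.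
Local Open Scope ring_scope.

From mathcomp Require Import zify lra.
Import Order.TTheory GRing.Theory Num.Theory.

Module CylTop.
Import ArrowAsProduct.
Definition agree (f g : cantor_space) (n : nat) := forall i, (i < n)%N -> f i = g i.

Lemma cyl_nbhs (f g : cantor_space) n : agree g f n -> nbhs g [set h : cantor_space | agree h f n].
Proof.
elim: n => [|n IH] Hg.
  by apply: filterS filterT => h _ i.
have H1 : nbhs g [set h : cantor_space | agree h f n].
  by apply: IH => i Hi; apply: Hg; rewrite ltnS ltnW.
have H2 : nbhs g [set h : cantor_space | h n = f n].
  have := @proj_continuous nat (fun _ => bool) n g.
  move=> /(_ [set b | b = f n]).
  apply.
  rewrite nbhs_principalE; apply/principal_filterP => /=.
  by rewrite /proj Hg.
apply: filterS (filterI H1 H2) => h [Ha Hb] i; rewrite ltnS leq_eqVlt.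
by case/orP => [/eqP -> //|]; apply: Ha.
Qed.

Lemma nbhs_cyl (f : cantor_space) (U : set cantor_space) :
  nbhs f U -> exists n, forall g, agree g f n -> U g.
Proof.
move=> Uf; apply: contrapT => Hn.
have /choice [G HG] : forall n, exists g, agree g f n /\ ~ U g.
  move=> n; apply: contrapT => Hn2; apply: Hn; exists n => g Hg.
  by apply: contrapT => nU; apply: Hn2; exists g.
have Gcvg : G @ \oo --> (f : forall i : nat, (fun _ => bool) i).
  apply/cvg_sup => N V [W] [[Z] oZ <-] ZfN ZV.
  apply: (filterS ZV); rewrite nbhs_simpl; exists N.+1 => // i /= Hi.
  by rewrite /= (proj1 (HG i)).
have [N _ HN] := Gcvg U Uf.
exact: (proj2 (HG N)) (HN N (leqnn N)).
Qed.
End CylTop.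
Import CylTop.
Definition ND (E : set cantor_space) := forall (f : cantor_space) n,
  exists (g : cantor_space) m, [/\ (n <= m)%N, agree g f n &
    forall h, agree h g m -> ~ E h].

Lemma agree_sym f g n : agree f g n -> agree g f n.
Proof. by move=> H i Hi; rewrite H. Qed.

Lemma agree_trans f g h n : agree f g n -> agree g h n -> agree f h n.
Proof. by move=> H1 H2 i Hi; rewrite H1 // H2. Qed.

Lemma agree_le f g n m : (m <= n)%N -> agree f g n -> agree f g m.
Proof. by move=> Hmn H i Hi; apply: H; apply: leq_trans Hmn. Qed.

Lemma ND_of_nd (E : set cantor_space) : nowhere_dense E -> ND E.
Proof.
rewrite /nowhere_dense => HE f n.
have [g [Hg Hcl]] : exists g, agree g f n /\ ~ closure E g.
  apply: contrapT => Hn.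
  have H1 : nbhs f (closure E).
    apply: (filterS _ (@cyl_nbhs f f n (fun i _ => erefl (f i)))).
    move=> g Hg; apply: contrapT => Hc; apply: Hn; exists g; split => //.
  have : (interior (closure E)) f by [].
  by rewrite HE.
have [B HB HEB] : exists2 B, nbhs g B & ~ (E `&` B !=set0).
  apply: contrapT => Hn; apply: Hcl => B HB.
  by apply: contrapT => HEB; apply: Hn; exists B.
have [m Hm] := @nbhs_cyl g B HB.
exists g, (maxn n m); split => //; first exact: leq_maxl.
move=> h Hh Eh; apply: HEB; exists h; split => //; apply: Hm.
by apply: agree_le Hh; exact: leq_maxr.
Qed.

Lemma nd_of_ND (E : set cantor_space) : ND E -> nowhere_dense E.
Proof.
move=> HE; rewrite /nowhere_dense; apply/seteqP; split => // f Hf.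
have [n Hn] := @nbhs_cyl f _ Hf.
have [g [m [_ Hgf Hgm]]] := HE f n.
have [h [Eh Hh]] := Hn g Hgf _ (@cyl_nbhs g g m (fun i _ => erefl (g i))).
exact: Hgm Hh Eh.
Qed.
Section Tal.
Variable Fs : nat -> set cantor_space.
Hypothesis HF : forall j, ND (Fs j).

Lemma iter_ext (T : eqType) (L : seq T) (P : T -> cantor_space) (J : T -> nat) a0 :
  exists b (r : cantor_space), (a0 < b)%N /\ forall t, t \in L -> forall h,
    agree h (P t) a0 -> (forall i, (a0 <= i < b)%N -> h i = r i) -> ~ Fs (J t) h.
Proof.
elim: L => [|t L [b1 [r1 [Hb1 IH]]]].
  by exists a0.+1, (fun _ => false); split => // t; rewrite in_nil.
pose q : cantor_space := fun i => if (i < a0)%N then P t i else r1 i.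
have [g [m [Hm Hgq Hgm]]] := HF (J t) q b1.
exists m, g; split; first exact: leq_trans Hb1 Hm.
move=> t'; rewrite in_cons => /orP[/eqP ->|Ht'] h Hh Hr.
  apply: Hgm => i Hi; case: (ltnP i a0) => Hia.
    by rewrite Hh // Hgq ?(leq_trans Hia (ltnW Hb1)) // /q Hia.
  by rewrite Hr // Hia.
apply: (IH t' Ht' h Hh) => i /andP[Hi1 Hi2].
rewrite Hr; last by rewrite Hi1 (leq_trans Hi2 Hm).
by rewrite Hgq // /q ltnNge Hi1.
Qed.

Lemma step_ext k a0 : exists b (r : cantor_space), (a0 < b)%N /\
  forall h, (forall i, (a0 <= i < b)%N -> h i = r i) ->
    forall j, (j <= k)%N -> ~ Fs j h.
Proof.
pose P (t : ({ffun 'I_a0 -> bool} * 'I_k.+1)%type) : cantor_space :=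
  fun i => odflt false (omap t.1 (insub i)).
pose J (t : ({ffun 'I_a0 -> bool} * 'I_k.+1)%type) := val t.2.
have [b [r [Hb H]]] := @iter_ext _ (enum (predT : pred ({ffun 'I_a0 -> bool} * 'I_k.+1)%type)) P J a0.
exists b, r; split => // h Hh j Hj.
have := H ([ffun o : 'I_a0 => h (val o)], Ordinal (Hj : (j < k.+1)%N)).
apply => //; first by rewrite mem_enum.
move=> i Hi; rewrite /P /= insubT /= ffunE //.
Qed.

Lemma talagrand : exists (a : nat -> nat) (r : nat -> cantor_space),
  (forall k, (a k < a k.+1)%N) /\
  forall k h, (forall i, (a k <= i < a k.+1)%N -> h i = r k i) ->
    forall j, (j <= k)%N -> ~ Fs j h.
Proof.
have /choice [st Hst] : forall p : nat * nat, exists br : nat * cantor_space,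
    (p.2 < br.1)%N /\ forall h, (forall i, (p.2 <= i < br.1)%N -> h i = br.2 i) ->
    forall j, (j <= p.1)%N -> ~ Fs j h.
  move=> [k a0]; have [b [r H]] := step_ext k a0; by exists (b, r).
pose a := fix a k := if k is k'.+1 then (st (k', a k')).1 else 0%N.
exists a, (fun k => (st (k, a k)).2); split => k; first exact: (proj1 (Hst (k, a k))).
exact: (proj2 (Hst (k, a k))).
Qed.
End Tal.
Section Mix.
Variables (a : nat -> nat) (r : nat -> cantor_space).
Hypothesis Ha : forall k, (a k < a k.+1)%N.

Definition mix (Q : nat -> bool) (d : cantor_space) : cantor_space := fun i =>
  match [pick k : 'I_i.+1 | Q k && (a k <= i < a k.+1)%N] with
  | Some k => r k i | None => d i end.

Lemma a_mono k k' : (k <= k')%N -> (a k <= a k')%N.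
Proof.
elim: k' => [|k' IH]; first by rewrite leqn0 => /eqP ->.
rewrite leq_eqVlt => /orP[/eqP -> //|]; rewrite ltnS => /IH H.
exact: leq_trans H (ltnW (Ha k')).
Qed.

Lemma a_ge k : (k <= a k)%N.
Proof. elim: k => [//|k IH]; exact: leq_ltn_trans IH (Ha k). Qed.

Lemma blk_uniq k k' i : (a k <= i < a k.+1)%N -> (a k' <= i < a k'.+1)%N -> k = k'.
Proof.
move=> /andP[H1 H2] /andP[H3 H4]; apply/eqP; rewrite eqn_leq.
apply/andP; split; rewrite leqNgt; apply/negP => Hlt.
  have H5 := a_mono _ _ Hlt; have := leq_trans H5 H1.
  by rewrite leqNgt H4.
have H5 := a_mono _ _ Hlt; have := leq_trans H5 H3.
by rewrite leqNgt H2.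
Qed.

Lemma mixP (Q : nat -> bool) (d : cantor_space) i :
  (exists k, [/\ Q k, (a k <= i < a k.+1)%N & mix Q d i = r k i]) \/
  ((forall k, Q k -> ~~ (a k <= i < a k.+1)%N) /\ mix Q d i = d i).
Proof.
rewrite /mix; case: pickP => [k /andP[Qk Hk]|Hn]; first by left; exists k.
right; split => // k Qk; apply/negP => Hk.
have Hki : (k < i.+1)%N by rewrite ltnS; apply: leq_trans (a_ge k) _; case/andP: Hk.
by have := Hn (Ordinal Hki); rewrite /= Qk Hk.
Qed.

Lemma mixQ (Q : nat -> bool) (d : cantor_space) k i : Q k -> (a k <= i < a k.+1)%N -> mix Q d i = r k i.
Proof.
move=> Qk Hk; case: (mixP Q d i) => [[k' [Qk' Hk' ->]]|[Hn _]].
  by rewrite (blk_uniq _ _ _ Hk' Hk).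
by move: (Hn k Qk); rewrite Hk.
Qed.

Lemma mixN (Q : nat -> bool) (d : cantor_space) i : (forall k, Q k -> ~~ (a k <= i < a k.+1)%N) -> mix Q d i = d i.
Proof.
move=> Hn; case: (mixP Q d i) => [[k' [Qk' Hk' _]]|[_ ->//]].
by move: (Hn k' Qk'); rewrite Hk'.
Qed.
End Mix.

Lemma ideal_blocks (I : set (set nat)) : is_ideal I ->
  baire_property (ideal_in_cantor I) ->
  exists a : nat -> nat, (forall k, (a k < a k.+1)%N) /\
  forall A, I A -> exists K, forall k, (K <= k)%N ->
    ~ (forall i, (a k <= i < a k.+1)%N -> A i).
Proof.
move=> [IU IS IT IF] [U [oU [F [HF Hcov]]]].
have NDF : forall j, ND (F j) := fun j => @ND_of_nd (F j) (HF j).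
have [a [r [Ha Hr]]] := @talagrand F NDF.
have U0 : forall f, ~ U f.
  move=> f Uf.
  have [L HL] := @nbhs_cyl f U (open_nbhs_nbhs (conj oU Uf)).
  pose d1 : cantor_space := fun i => if (i < L)%N then f i else true.
  have inI : forall Q : nat -> bool, (forall j, exists k, Q k /\ (j <= k)%N) ->
      (forall k, Q k -> (L <= a k)%N) -> I [set n | mix a r Q d1 n].
    move=> Q HQ HQL.
    have Hag : agree (mix a r Q d1) f L.
      move=> i Hi; rewrite (mixN _ _ Ha); first by rewrite /d1 Hi.
      by move=> k Qk; rewrite negb_and -ltnNge (leq_trans Hi (HQL k Qk)).
    have UA := HL _ Hag.
    apply: contrapT => nI.
    have : (\bigcup_n F n) (mix a r Q d1) by apply: Hcov; right; split.
    case=> j _ Fj; have [k [Qk Hjk]] := HQ j.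
    apply: (Hr k (mix a r Q d1) _ j Hjk Fj) => i Hi; exact: mixQ.
  pose Q1 := fun k => odd k && (L <= a k)%N.
  pose Q2 := fun k => ~~ odd k && (L <= a k)%N.
  have I1 : I [set n | mix a r Q1 d1 n].
    apply: inI => [j|k /andP[] //]; exists (j + L).*2.+1; split.
      rewrite /Q1 /= odd_double /=; apply: (leq_trans _ (a_ge a Ha _)).
      by rewrite -addnn; lia.
    by rewrite -addnn; lia.
  have I2 : I [set n | mix a r Q2 d1 n].
    apply: inI => [j|k /andP[] //]; exists (j + L).*2; split.
      rewrite /Q2 /= odd_double /=; apply: (leq_trans _ (a_ge a Ha _)).
      by rewrite -addnn; lia.
    by rewrite -addnn; lia.
  apply: IT.
  have -> : [set: nat] = [set n | mix a r Q1 d1 n] `|` [set n | mix a r Q2 d1 n]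
      `|` `I_L.
    apply/seteqP; split => // i _ /=; case: (ltnP i L) => HiL; [by right|left].
    have Hd : d1 i = true by rewrite /d1 ltnNge HiL.
    case: (mixP a r Ha Q1 d1 i) => [[k [Qk Hk ->]]|[_ ->]]; last by left.
    right; rewrite (mixN _ _ Ha) // => k' /andP[Hk'o _]; apply/negP => Hk'.
    have Ekk := blk_uniq a Ha _ _ _ Hk Hk'; subst k'.
    by move: Qk Hk'o; rewrite /Q1 => /andP[-> _].
  by apply: IU (IU _ _ I1 I2) (IF _ (finite_II L)).
exists a; split => // A IA.
apply: contrapT => Hn.
have Hinf : forall K, exists k, (K <= k)%N /\ forall i, (a k <= i < a k.+1)%N -> A i.
  move=> K; apply: contrapT => H1; apply: Hn; exists K => k Hk H2; apply: H1.
  by exists k; split.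
pose Q := fun k => `[< forall i, (a k <= i < a k.+1)%N -> A i >].
pose A' := mix a r Q (fun _ => false).
have IA' : I [set n | A' n].
  apply: IS IA => i /= HA'.
  case: (mixP a r Ha Q (fun _ => false) i) => [[k [Qk Hk _]]|[_ HE]].
    by move/asboolP: Qk; apply.
  by move: HA'; rewrite /A' HE.
have : (\bigcup_n F n) A' by apply: Hcov; left; split => //; exact: U0.
case=> j _ Fj; have [k [Hjk Hblk]] := Hinf j.
apply: (Hr k A' _ j Hjk Fj) => i Hi; apply: (mixQ _ _ Ha) => //.
exact/asboolP.
Qed.
Lemma near_oo2 (P : nat * nat -> Prop) M0 :
  (forall n : nat * nat, (M0 <= n.1)%N -> P n) -> \forall n \near (\oo, \oo), P n.
Proof.
move=> H; exists ([set k | (M0 <= k)%N], setT).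
  by split; [exists M0 | exact: filterT].
by move=> [n1 n2] [/= Hn1 _]; exact: H.
Qed.

Lemma not_uncond (R : realType) (X : completeNormedModType R) (x : nat -> X) :
  ~ uncond_cvg x -> exists d : R, 0 < d /\ forall N, exists M (b : nat -> bool),
    d < `|\sum_(N <= i < M | b i) x i|.
Proof.
move=> Hnu; apply: contrapT => Hn; apply: Hnu => p [q pK qK].
apply/cauchy_cvgP/cauchy_seriesP => e e0.
have [N HN] : exists N, forall M (b : nat -> bool),
    `|\sum_(N <= i < M | b i) x i| <= e / 2.
  apply: contrapT => H1; apply: Hn; exists (e / 2); split; first by rewrite divr_gt0.
  move=> N; apply: contrapT => H2; apply: H1; exists N => M b.
  rewrite leNgt; apply/negP => H3; by apply: H2; exists M, b.
pose M0 := (\max_(i < N) q i).+1.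
apply: (@near_oo2 _ M0) => -[n1 n2] /= Hn1.
case: (leqP n2 n1) => Hn12.
  by rewrite big_geq // normr0.
pose Mx := (\max_(k < n2) p k).+1.
pose b := fun i => (n1 <= q i < n2)%N.
have -> : \sum_(n1 <= k < n2) (x \o p) k = \sum_(N <= i < Mx | b i) x i.
  have -> : \sum_(n1 <= k < n2) (x \o p) k = \sum_(i <- map p (index_iota n1 n2)) x i.
    by rewrite big_map.
  rewrite [RHS](_ : _ = \sum_(i <- [seq i <- index_iota N Mx | b i]) x i); last by rewrite big_filter.
  apply: perm_big; apply: uniq_perm.
  - by rewrite map_inj_uniq ?iota_uniq //; exact: can_inj pK.
  - exact: filter_uniq (iota_uniq _ _).
  move=> i; rewrite mem_filter mem_index_iota; apply/mapP/idP.
    move=> [k Hk ->]; move: Hk; rewrite mem_index_iota => /andP[Hk1 Hk2].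
    rewrite /b pK Hk1 Hk2 /=.
    have H1 := @leq_bigmax _ (fun k : 'I_n2 => p k) (Ordinal Hk2).
    rewrite /Mx ltnS H1 andbT leqNgt; apply/negP => H.
    have := @leq_bigmax _ (fun i : 'I_N => q i) (Ordinal H); rewrite /= pK.
    rewrite /M0 in Hn1; move=> Hk; have := leq_ltn_trans Hk Hn1; by rewrite ltnNge Hk1.
  move=> /andP[/andP[Hq1 Hq2] _]; exists (q i); last by rewrite qK.
  by rewrite mem_index_iota Hq1 Hq2.
apply: le_lt_trans (HN _ _) _.
by rewrite ltr_pdivrMr // ltr_pMr // ltr1n.
Qed.
Section Signs.
Variables (R : realType) (X : completeNormedModType R) (x : nat -> X).

Definition Ps (t : cantor_space) n : X :=
  series (fun i => sgn_of (R:=R) (t i) *: x i) n.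

Lemma Ps_agree t t' n : agree t t' n -> Ps t n = Ps t' n.
Proof.
move=> H; rewrite /Ps /series /=; apply: eq_big_nat => i /andP[_ Hi].
by rewrite H.
Qed.

Lemma PsS t n : Ps t n.+1 = Ps t n + sgn_of (R:=R) (t n) *: x n.
Proof. by rewrite /Ps /series /= big_nat_recr. Qed.

Lemma greedy (v y : X) :
  `|v| <= `|if `|v - y| <= `|v + y| then v + y else v - y|.
Proof.
have H : `|v| *+ 2 <= `|v + y| + `|v - y|.
  rewrite -normrMn (_ : v *+ 2 = (v + y) + (v - y)); first exact: ler_normD.
  by rewrite addrACA subrr addr0 mulr2n.
rewrite mulr2n in H; case: ifP => H'; first by lra.
move/negbT: H'; rewrite -ltNge => H'; lra.
Qed.

Lemma E_ND (d : R) (Hd : 0 < d)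
  (HH : forall N, exists M (b : nat -> bool), d < `|\sum_(N <= i < M | b i) x i|)
  (a : nat -> nat) (Ha : forall k, (a k < a k.+1)%N) n :
  ND [set t | forall k, (n <= k)%N ->
     ~ (forall i, (a k <= i < a k.+1)%N -> d / 2 < `|Ps t i.+1 - Ps t n.+1|)].
Proof.
move=> f p.
pose L := maxn p n.+1.
have [M [b Hb]] := HH L.
have HLM : (L <= M)%N.
  case: (leqP L M) => // HML; move: Hb.
  by rewrite big_geq ?(ltnW HML) // normr0 => Hb; lra.
pose c := Ps f n.+1.
pose tb (be : bool) : cantor_space :=
  fun i => if (i < L)%N then f i else if b i then be else true.
have Hdiff : Ps (tb true) M - Ps (tb false) M = 2 *: \sum_(L <= i < M | b i) x i.
  rewrite /Ps /series /= -sumrB (big_cat_nat (leq0n L) HLM) /=.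
  rewrite big_nat_cond big1 ?add0r; last first.
    by move=> i /andP[/andP[_ Hi] _]; rewrite /tb Hi subrr.
  rewrite scaler_sumr [RHS]big_mkcond /=; apply: eq_big_nat => i /andP[Hi _].
  rewrite /tb ltnNge Hi /=; case: (b i) => /=; last by rewrite subrr.
  by rewrite /sgn_of scale1r scaleN1r opprK scaler_nat mulr2n.
have [be Hbe] : exists be, d < `|Ps (tb be) M - c|.
  apply: contrapT => Hn.
  have H1 : `|Ps (tb true) M - c| <= d.
    by rewrite leNgt; apply/negP => H; apply: Hn; exists true.
  have H2 : `|Ps (tb false) M - c| <= d.
    by rewrite leNgt; apply/negP => H; apply: Hn; exists false.
  have H3 := ler_normB (Ps (tb true) M - c) (Ps (tb false) M - c).
  rewrite opprB addrA subrK Hdiff normrZ in H3.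
  have H4 : `|2 : R| = 2 by rewrite ger0_norm.
  rewrite H4 in H3; lra.
pose g0 := tb be.
pose y k := x (M + k)%N.
pose vs := fix vs k := if k is k'.+1 then
   (if `|vs k' - y k'| <= `|vs k' + y k'| then vs k' + y k' else vs k' - y k')
   else Ps g0 M - c.
pose be' k := `|vs k - y k| <= `|vs k + y k|.
pose g : cantor_space := fun i => if (i < M)%N then g0 i else be' (i - M)%N.
have Hvs : forall k, Ps g (M + k) - c = vs k.
  elim=> [|k IH].
    rewrite addn0 /=; congr (_ - _); apply: Ps_agree => i Hi.
    by rewrite /g Hi.
  rewrite addnS PsS addrAC IH /g ltnNge leq_addr /= addKn /=.
  rewrite /be'; case: ifP => _ /=; by rewrite /sgn_of ?scale1r ?scaleN1r.
have Hgrow : forall k, d < `|vs k|.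
  elim=> [|k IH] //=; apply: lt_le_trans IH _; exact: greedy.
pose kk := maxn n M.
have HMkk : (M <= a kk)%N by apply: leq_trans (leq_maxr n M) (a_ge a Ha kk).
exists g, (maxn p (a kk.+1)); split; first exact: leq_maxl.
  move=> i Hi; have HiL : (i < L)%N by apply: leq_trans Hi (leq_maxl _ _).
  by rewrite /g (leq_trans HiL HLM) /g0 /tb HiL.
move=> h Hh /(_ kk (leq_maxl n M)); apply => i /andP[Hi1 Hi2].
have Hhg : agree h g (a kk.+1) by apply: agree_le Hh; exact: leq_maxr.
rewrite (@Ps_agree h g i.+1 (@agree_le h g _ _ Hi2 Hhg)).
have Hn1 : (n.+1 <= a kk.+1)%N.
  apply: leq_trans (a_ge a Ha kk.+1); rewrite ltnS; exact: leq_maxl.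
rewrite (@Ps_agree h g n.+1 (@agree_le h g _ _ Hn1 Hhg)).
have -> : Ps g n.+1 = c.
  apply: Ps_agree => j Hj; have HjL : (j < L)%N by apply: leq_trans Hj (leq_maxr _ _).
  by rewrite /g (leq_trans HjL HLM) /g0 /tb HjL.
have HMi : (M <= i.+1)%N by apply: leq_trans HMkk (leqW Hi1).
rewrite -(subnKC HMi) Hvs.
have := Hgrow (i.+1 - M)%N; lra.
Qed.
End Signs.

Theorem theorem3p4 (R : realType) (X : completeNormedModType R)
    (x : nat -> X) (I : set (set nat)) :
  ~ uncond_cvg x ->
  is_ideal I ->
  baire_property (ideal_in_cantor I) ->
  meager (B_set I x).
Proof.
move=> Hnu Hid Hbp.
have [d [Hd HH]] := @not_uncond R X x Hnu.
have [a [Ha Hblk]] := @ideal_blocks I Hid Hbp.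
case: Hid => IU IS IT IF.
exists (fun n => [set t | forall k, (n <= k)%N ->
     ~ (forall i, (a k <= i < a k.+1)%N -> d / 2 < `|@Ps R X x t i.+1 - @Ps R X x t n.+1|)]).
split.
  by move=> n; apply: nd_of_ND; exact: E_ND.
move=> t [l Hl].
have Bad := Hl (d / 4) (ltac:(lra)).
have [K HK] := Hblk _ Bad.
have [m [HKm Hm]] : exists m, (K <= m)%N /\ `|@Ps R X x t m.+1 - l| <= d / 4.
  apply: contrapT => Hn; apply: IT.
  have -> : [set: nat] = [set n | d / 4 < `|@Ps R X x t n.+1 - l|] `|` `I_K.
    apply/seteqP; split => // i _; case: (ltnP i K) => HiK; [by right | left].
    rewrite /= ltNge; apply/negP => H; apply: Hn; exists i; split => //.
  exact: IU Bad (IF _ (finite_II K)).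
exists m => //.
move=> k Hmk Hall; apply: (HK k (leq_trans HKm Hmk)) => i Hi.
have H1 := Hall i Hi.
have H2 := ler_distD l (@Ps R X x t i.+1) (@Ps R X x t m.+1).
rewrite (distrC l) in H2.
rewrite /=; rewrite -/(@Ps R X x t i.+1); lra.
Qed.
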